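(* Let $m=x_{i_1}\cdots x_{i_s}$ ($i_1\le\dots\le i_s$, $s\ge1$) be a monomial of $S=k[x_1,\dots,x_n]$ and $B=\mathrm{Borel}(m)$. For $0\le d\le s-1$ let $c_d$ be the number of minimal monomial generators of $\operatorname{trunc}_d(B)$ of degree $d$ (so $c_0=1$). Then the Hilbert series of $S/B$ is \[\mathrm{HS}(S/B)=\sum_{d=0}^{s-1}\frac{c_d\,t^d}{(1-t)^{\,n-i_{d+1}}},\] and the multiplicity of $S/B$ is $e(S/B)=\sum_{d:\ i_{d+1}=i_1}c_d$.
   Context: $\mathrm{Borel}(m)$ is the smallest monomial ideal containing $m$ closed under Borel moves $\mu\mapsto\mu\frac{x_{a_1}}{x_{b_1}}\cdots\frac{x_{a_r}}{x_{b_r}}$ ($a_t<b_t$, all $x_{b_t}\mid\mu$). For a monomial $\mu=x_{k_1}\cdots x_{k_r}$ ($k_1\le\dots\le k_r$), $\operatorname{trunc}_d(\mu)=x_{k_1}\cdots x_{k_d}$ if $d\le r$ and $=\mu$ otherwise; $\operatorname{trunc}_d(I)$ is the ideal generated by the $d$-truncations of the monomials of $I$, with $\operatorname{trunc}_0(B)=(1)$. *)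

(* Defs.v *)
From HB Require Import structures.
From mathcomp Require Import all_boot all_order all_algebra.
Set Implicit Arguments. Unset Strict Implicit. Unset Printing Implicit Defensive.
Import Order.TTheory GRing.Theory Num.Theory.

(* Monomials of S = k[x_1,...,x_n] as exponent vectors; the ordinal
   i : 'I_n stands for the variable x_(i+1). *)
Definition mono (n : nat) := {ffun 'I_n -> nat}.

Section Monomials.
Variable n : nat.

Definition mdeg (u : mono n) : nat := \sum_(i < n) u i.
Definition mdvd (u v : mono n) : bool := [forall i, u i <= v i].

(* the monomial u = x_(k_1) ... x_(k_r), k_1 <= ... <= k_r, as the
   nondecreasing sequence of its variable indices *)
Definition mono_seq (u : mono n) : seq 'I_n :=
  flatten [seq nseq (u i) i | i <- enum 'I_n].
Definition seq_mono (s : seq 'I_n) : mono n := [ffun i => count_mem i s].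

(* trunc_d(u) : product of the first d variables (or u itself if d >= deg) *)
Definition trunc (d : nat) (u : mono n) : mono n := seq_mono (take d (mono_seq u)).

(* A monomial ideal, represented by the set of its monomials. *)
Definition mono_ideal (I : mono n -> Prop) : Prop :=
  forall u v, I u -> mdvd u v -> I v.

(* v = u * (x_(a_1)/x_(b_1)) ... (x_(a_r)/x_(b_r)), a_t < b_t, with the
   product x_(b_1)...x_(b_r) dividing u (pairs (a_t,b_t)). *)
Definition borel_move (u v : mono n) : Prop :=
  exists ps : seq ('I_n * 'I_n),
    all (fun p : 'I_n * 'I_n => (p.1 < p.2)%N) ps /\
    forall i, count (fun p : 'I_n * 'I_n => p.2 == i) ps <= u i /\
              v i = u i + count (fun p : 'I_n * 'I_n => p.1 == i) ps - count (fun p : 'I_n * 'I_n => p.2 == i) ps.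

Definition borel_closed (I : mono n -> Prop) : Prop :=
  forall u v, I u -> borel_move u v -> I v.

Definition Borel (m : mono n) : mono n -> Prop :=
  fun u => forall I, mono_ideal I -> I m -> borel_closed I -> I u.

Definition trunc_ideal (d : nat) (I : mono n -> Prop) : mono n -> Prop :=
  fun v => exists u, I u /\ mdvd (trunc d u) v.

Definition min_gen (I : mono n -> Prop) (u : mono n) : Prop :=
  I u /\ forall v, I v -> mdvd v u -> v = u.

Definition is_card (P : mono n -> Prop) (k : nat) : Prop :=
  exists l : seq (mono n), uniq l /\ (forall u, P u <-> u \in l) /\ size l = k.

(* i_(d+1) (1-based) for m = x_(i_1)...x_(i_s), i_1 <= ... <= i_s *)
Definition var_idx (m : mono n) (d : nat) : nat :=
  (nth 0 [seq val k | k <- mono_seq m] d).+1.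

End Monomials.

(* inv1mt r k = coefficient of t^k in the power series 1/(1-t)^r *)
Fixpoint inv1mt (r k : nat) : nat :=
  match r with
  | 0 => nat_of_bool (k == 0)
  | r'.+1 => \sum_(i < k.+1) inv1mt r' i
  end.

(* Multiplicity of a standard graded algebra with Hilbert function hf:
   HS(t) = sum_j hf j t^j = h(t)/(1-t)^D with h a polynomial (coefficient
   list h) such that h(1) <> 0; then e = h(1). *)
Definition is_multiplicity (hf : nat -> nat) (e : int) : Prop :=
  exists (D : nat) (h : seq int),
    (forall j, Posz (hf j) = (\sum_(i < size h | (i <= j)%N) h`_i * Posz (inv1mt D (j - i)))%R)
    /\ (\sum_(i < size h) h`_i)%R = e /\ e != 0%R.

(* Main.v *)
Require Import Defs.
From HB Require Import structures.
From mathcomp Require Import all_boot all_order all_algebra.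
Import Order.TTheory GRing.Theory Num.Theory.
From mathcomp Require Import zify.
From Stdlib Require Import FunctionalExtensionality.
From mathcomp Require Import ring.
Set Implicit Arguments. Unset Strict Implicit. Unset Printing Implicit Defensive.
Section Basics.
Variable n : nat.
Implicit Types u v w : mono n.

Definition ps u (a : nat) : nat := \sum_(i < n | i < a) u i.

Lemma psS u (i : 'I_n) : ps u i.+1 = ps u i + u i.
Proof.
rewrite /ps (bigD1 i) //= addnC; congr (_ + _).
apply: eq_bigl => j /=; rewrite ltnS -val_eqE /=.
by case: ltngtP.
Qed.

Lemma ps0 u : ps u 0 = 0.
Proof. by rewrite /ps big1. Qed.

Lemma psn u : ps u n = mdeg u.
Proof. by rewrite /ps /mdeg; apply: eq_bigl => i; rewrite ltn_ord. Qed.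

Lemma ps_mono u a b : a <= b -> ps u a <= ps u b.
Proof.
move=> ab; rewrite /ps !(big_mkcond (fun i : 'I_n => i < _)) /=.
apply: leq_sum => i _; case: ifP => // ia.
by rewrite (leq_trans ia ab).
Qed.

Lemma ps_le_deg u a : ps u a <= mdeg u.
Proof.
rewrite /ps /mdeg (big_mkcond (fun i : 'I_n => i < _)) /=.
by apply: leq_sum => i _; case: ifP.
Qed.

Lemma ps_ge u a : n <= a -> ps u a = mdeg u.
Proof.
move=> na; rewrite /ps /mdeg; apply: eq_bigl => i.
by rewrite (leq_trans (ltn_ord i) na).
Qed.

Lemma ps_inj u v : (forall a, a <= n -> ps u a = ps v a) -> u = v.
Proof.
move=> h; apply/ffunP => i.
have h1 := h i.+1 (ltn_ord i); have h2 := h i (ltnW (ltn_ord i)).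
by rewrite !psS h2 in h1; apply: addnI h1.
Qed.

Definition madd u v : mono n := [ffun i => u i + v i].
Definition msub u v : mono n := [ffun i => u i - v i].

Lemma ps_add u v a : ps (madd u v) a = ps u a + ps v a.
Proof. by rewrite /ps -big_split; apply: eq_bigr => i _; rewrite ffunE. Qed.

Lemma mdeg_add u v : mdeg (madd u v) = mdeg u + mdeg v.
Proof. by rewrite -!psn ps_add. Qed.

Lemma ps_sub u v a : mdvd v u -> ps (msub u v) a = ps u a - ps v a.
Proof.
move=> /forallP h; rewrite /ps -sumnB; last by move=> i _; apply: h.
by apply: eq_bigr => i _; rewrite ffunE.
Qed.

Lemma add_sub u v : mdvd v u -> madd v (msub u v) = u.
Proof.
move=> /forallP h; apply/ffunP => i; by rewrite !ffunE subnKC // h.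
Qed.

Lemma sum_count_mem (P : pred 'I_n) (s : seq 'I_n) :
  \sum_(i < n | P i) count_mem i s = count P s.
Proof.
elim: s => [|x s IH] /=; first by rewrite big1.
rewrite big_split /= IH; congr (_ + _).
rewrite (big_mkcond P) (bigD1 x) //= big1 ?addn0; first by rewrite eqxx; case: (P x).
by move=> i /negbTE; rewrite eq_sym => ->; case: (P i).
Qed.

Lemma ps_seq_mono (s : seq 'I_n) a :
  ps (seq_mono s) a = count (fun k : 'I_n => k < a) s.
Proof.
rewrite /ps -sum_count_mem; apply: eq_bigr => i _; by rewrite ffunE.
Qed.

Lemma count_mono_seq (P : pred 'I_n) u :
  count P (mono_seq u) = \sum_(i < n | P i) u i.
Proof.
rewrite /mono_seq count_flatten -map_comp sumnE big_map big_enum /=.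
rewrite (big_mkcond P); apply: eq_bigr => i _ /=.
by rewrite count_nseq; case: (P i); rewrite ?mul1n ?mul0n.
Qed.

Lemma ps_mono_seq u a :
  ps u a = count (fun k : 'I_n => k < a) (mono_seq u).
Proof. by rewrite count_mono_seq. Qed.

Lemma size_mono_seq u : size (mono_seq u) = mdeg u.
Proof. by rewrite -count_predT count_mono_seq. Qed.

Lemma count_mem_mono_seq u i : count_mem i (mono_seq u) = u i.
Proof. by rewrite count_mono_seq big_pred1_eq. Qed.

End Basics.
Section Sorted.

Lemma path_leq_nseq x k y : x <= y -> path leq x (nseq k y).
Proof.
elim: k x => [|k IH] x xy //=; rewrite xy /=; exact: IH.
Qed.

Lemma path_leq_weaken x y s : x <= y -> path leq y s -> path leq x s.
Proof. by case: s => //= z s xy /andP[yz ->]; rewrite (leq_trans xy yz). Qed.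

Lemma path_flatten_nseq (T : Type) (g f : T -> nat) x0 (l : seq T) :
  path leq x0 (map g l) -> path leq x0 (flatten [seq nseq (f i) (g i) | i <- l]).
Proof.
elim: l x0 => [|y l IH] x0 //= /andP[xy pl].
rewrite cat_path path_leq_nseq //=.
case: (f y) => [|k] /=.
  by apply: IH; apply: path_leq_weaken pl.
have -> : forall z, last z (nseq k z) = z by move=> z; elim: k {IH pl xy} => //.
exact: IH.
Qed.

Lemma sorted_mono_seq n (u : mono n) : sorted leq (map val (mono_seq u)).
Proof.
rewrite /mono_seq map_flatten -map_comp.
have -> : [seq (map val \o (fun i : 'I_n => nseq (u i) i)) x | x <- enum 'I_n] =
          [seq nseq (u i) (val i) | i <- enum 'I_n].
  by apply: eq_map => i /=; rewrite map_nseq.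
apply: (@path_sorted _ _ 0); apply: path_flatten_nseq.
rewrite val_enum_ord; have := iota_sorted 0 n.
by case: (iota 0 n) => //= x s ->; rewrite andbT.
Qed.

Lemma count_take_sorted (L : seq nat) d a : sorted leq L ->
  count (fun k => k < a) (take d L) = minn d (count (fun k => k < a) L).
Proof.
elim: L d => [|x L IH] d /=; first by rewrite minn0.
move=> pL; have sL := path_sorted pL.
have allx := order_path_min leq_trans pL.
case: d => [|d] /=; first by rewrite min0n.
case: (ltnP x a) => xa /=.
  by rewrite IH // add1n minnSS.
have c0 : forall s, all (leq x) s -> count (fun k => k < a) s = 0.
  move=> s /allP hs; apply/eqP; rewrite -leqn0 leqNgt -has_count.
  apply/hasP => -[k /hs xk ka]; have := leq_trans xa xk; by rewrite leqNgt ka.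
rewrite (c0 L) // (c0 (take d L)) ?minn0 //.
by apply/allP => k /mem_take; move/allP: allx; apply.
Qed.

Lemma nth_sorted (L : seq nat) d a : sorted leq L -> d < size L ->
  (d < count (fun k => k < a) L) = (nth 0 L d < a).
Proof.
elim: L d => [|x L IH] d //= pL; have sL := path_sorted pL.
have allx := order_path_min leq_trans pL.
case: (ltnP x a) => xa /=.
  case: d => [|d] //=; rewrite ltnS => dL; rewrite add1n ltnS; exact: IH.
have c0 : count (fun k => k < a) L = 0.
  apply/eqP; rewrite -leqn0 leqNgt -has_count.
  apply/hasP => -[k kL ka]; move/allP: allx => /(_ k kL) xk.
  by have := leq_trans xa xk; rewrite leqNgt ka.
rewrite c0 /=; case: d => [|d] /=; first by rewrite (leq_gtF xa).
rewrite ltnS => dL; symmetry; apply/negbTE; rewrite -leqNgt.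
apply: (leq_trans xa); move/allP: allx; apply; exact: mem_nth.
Qed.

End Sorted.

Section Trunc.
Variable n : nat.
Implicit Types u v w : mono n.

Lemma ps_trunc d u a : ps (trunc d u) a = minn d (ps u a).
Proof.
rewrite /trunc ps_seq_mono ps_mono_seq.
rewrite -(count_map val (fun k => k < a)) map_take count_take_sorted ?sorted_mono_seq //.
by rewrite count_map.
Qed.

Lemma trunc_dvd d u : mdvd (trunc d u) u.
Proof.
apply/forallP => i; rewrite /trunc ffunE -count_mem_mono_seq.
rewrite -{2}(cat_take_drop d (mono_seq u)) count_cat; exact: leq_addr.
Qed.

Lemma mdeg_trunc d u : mdeg (trunc d u) = minn d (mdeg u).
Proof. by rewrite -!psn ps_trunc. Qed.

Lemma var_idx_ps (m : mono n) d a : d < mdeg m ->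
  (d < ps m a) = (var_idx m d <= a).
Proof.
move=> dm; rewrite ps_mono_seq -(count_map val (fun k => k < a)) nth_sorted ?sorted_mono_seq //.
by rewrite size_map size_mono_seq.
Qed.

Lemma var_idx_le (m : mono n) d : d < mdeg m -> var_idx m d <= n.
Proof.
move=> dm; rewrite -(var_idx_ps _ dm) ps_ge //.
Qed.

Lemma var_idx_mono (m : mono n) d : d < mdeg m -> var_idx m 0 <= var_idx m d.
Proof.
move=> dm; rewrite -(var_idx_ps _ (leq_ltn_trans (leq0n d) dm)).
have := (var_idx_ps (var_idx m d) dm); rewrite leqnn.
by apply: leq_ltn_trans.
Qed.
End Trunc.
Section BorelChar.
Variable n : nat.
Variable m : mono n.
Implicit Types u v w : mono n.

Definition Db d u := [forall a : 'I_n.+1, minn d (ps m a) <= ps u a].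

Lemma DbP d u : reflect (forall a, minn d (ps m a) <= ps u a) (Db d u).
Proof.
apply: (iffP forallP) => [h a|h a]; last exact: h.
case: (leqP a n) => an; first exact: (h (Ordinal (an : a < n.+1))).
have := h ord_max; rewrite /= !ps_ge // ltnW //.
Qed.

Lemma ps_dvd u v a : mdvd u v -> ps u a <= ps v a.
Proof. move=> /forallP h; apply: leq_sum => i _; exact: h. Qed.

Lemma Db_dvd d u v : Db d u -> mdvd u v -> Db d v.
Proof.
move=> /DbP h uv; apply/DbP => a; apply: leq_trans (h a) (ps_dvd _ uv).
Qed.

Lemma Db_mono d u : Db d.+1 u -> Db d u.
Proof.
move=> /DbP h; apply/DbP => a; apply: leq_trans (h a).
move: (ps m a) => x; lia.
Qed.

Lemma Db0 u : Db 0 u.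
Proof. by apply/DbP => a; rewrite min0n. Qed.

Lemma DbsP u : reflect (forall a, ps m a <= ps u a) (Db (mdeg m) u).
Proof.
apply: (iffP (DbP _ _)) => h a; have := h a;
by rewrite (minn_idPr (ps_le_deg _ _)).
Qed.

Lemma sum_count_f (T : Type) (f : T -> 'I_n) (P : pred 'I_n) (s : seq T) :
  \sum_(i < n | P i) count (fun p => f p == i) s = count (fun p => P (f p)) s.
Proof.
rewrite -(count_map f P) -sum_count_mem; apply: eq_bigr => i _.
by rewrite count_map.
Qed.

Lemma count_le_all (T : Type) (p q : pred T) (s : seq T) :
  all (fun x => p x ==> q x) s -> count p s <= count q s.
Proof.
elim: s => //= x s IH /andP[h /IH] hh; apply: leq_add => //.
by case: (p x) h => //= ->.
Qed.

Lemma borel_move_ps u v a : borel_move u v -> ps u a <= ps v a.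
Proof.
move=> [pl [hall hi]].
have e : ps v a + \sum_(i < n | i < a) count (fun p : 'I_n * 'I_n => p.2 == i) pl =
         ps u a + \sum_(i < n | i < a) count (fun p : 'I_n * 'I_n => p.1 == i) pl.
  rewrite /ps -!big_split /=; apply: eq_bigr => i _.
  have [h1 h2] := hi i; rewrite h2.
  move: h1; move: (u i) (count _ pl) (count _ pl) => x y z; lia.
move: e; rewrite (sum_count_f (fun p : 'I_n * 'I_n => p.2)) (sum_count_f (fun p : 'I_n * 'I_n => p.1)).
have : count (fun p : 'I_n * 'I_n => p.2 < a) pl <= count (fun p : 'I_n * 'I_n => p.1 < a) pl.
  apply: count_le_all; apply/allP => p pp; apply/implyP => h.
  move/allP: hall => /(_ p pp) h2; exact: ltn_trans h2 h.
lia.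
Qed.

Lemma Borel_Db u : Borel m u -> Db (mdeg m) u.
Proof.
move=> h; apply: (h (fun x => Db (mdeg m) x)).
- move=> x y; exact: Db_dvd.
- by apply/DbsP.
- move=> x y /DbsP hx mv; apply/DbsP => a; exact: leq_trans (hx a) (borel_move_ps a mv).
Qed.

Definition excess w u := \sum_(i < n) (w i - u i).

Lemma ps_split u c b : c <= b -> ps u b = ps u c + \sum_(i < n | c <= i < b) u i.
Proof.
move=> cb; rewrite /ps (bigID (fun i : 'I_n => i < c)) /=; congr (_ + _);
apply: eq_bigl => i /=; move: (nat_of_ord i) => x; apply/idP/idP; lia.
Qed.

Lemma Db_Borel_aux (I : mono n -> Prop) u :
  mono_ideal I -> borel_closed I ->
  forall k w, excess w u = k -> I w -> (forall a, ps w a <= ps u a) -> I u.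
Proof.
move=> HI HB k; elim: k => [|k IH] w ex Iw hw.
  apply: HI Iw _; apply/forallP => i.
  move/eqP: ex; rewrite sum_nat_eq0 => /forallP /(_ i) /=.
  by rewrite subn_eq0.
have [b0 hb0] : exists b, u b < w b.
  apply/existsP; apply: contraTT (isT : true) => /existsPn h.
  rewrite /excess big1 in ex => // i _; apply/eqP; rewrite subn_eq0 leqNgt; exact: h.
case: (@arg_minnP _ b0 (fun i => u i < w i) (fun i => val i) hb0) => b Pb bmin.
have bmin' : forall i : 'I_n, i < b -> w i <= u i.
  move=> i ib; rewrite leqNgt; apply/negP => h; have := bmin i h; by rewrite leqNgt ib.
have psb : ps w b < ps u b.
  have := hw b.+1; rewrite !psS; move: Pb; move: (u b) (w b) (ps w b) (ps u b) => x y z t; lia.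
have [a0 ha0] : exists a : 'I_n, (a < b) && (w a < u a).
  apply/existsP; apply: contraTT psb => /existsPn h; rewrite -leqNgt.
  apply: leq_sum => i ib; have := h i; rewrite ib /= -leqNgt; exact: id.
case: (@arg_maxnP _ a0 (fun i => (i < b) && (w i < u i)) (fun i => val i) ha0) => a Pa amax.
move/andP: Pa => [ab wau].
have mid : forall i : 'I_n, a < i -> i < b -> w i = u i.
  move=> i ai ib; apply/eqP; rewrite eqn_leq bmin' //=.
  rewrite leqNgt; apply/negP => h; have := amax i; rewrite ib h /= => /(_ isT).
  by rewrite leqNgt ai.
have anb : a != b by rewrite -val_eqE /= neq_ltn ab.
set w' : mono n := [ffun i => if i == a then w i + 1 else if i == b then w i - 1 else w i].
have Iw' : I w'.
  apply: (HB w) => //; exists [:: (a, b)]; split; first by rewrite /= ab.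
  move=> i /=; rewrite !addn0 /w' ffunE; split.
    by case: eqP => // <-; apply: leq_trans Pb.
  case: (i =P a) => [->|ia]; first by rewrite eqxx eq_sym (negbTE anb) subn0.
  rewrite (eq_sym a) (introF eqP ia) /= addn0 eq_sym.
  by case: (b == i); rewrite ?subn0.
have hw'i : forall i : 'I_n, w' i + (i == b) = w i + (i == a).
  move=> i; rewrite /w' ffunE.
  case: (i =P a) => [->|ia]; first by rewrite (negbTE anb) addn0 addn1.
  case: (i =P b) => [->|ib] /=; last by rewrite !addn0.
  by rewrite addn0 addn1 subn1 prednK //; apply: leq_ltn_trans Pb.
have pseq : forall c, ps w' c + (b < c) = ps w c + (a < c).
  elim=> [|c IHc]; first by rewrite !ps0.
  have e1 : forall x : 'I_n, (x < c.+1 : nat) = (x < c) + (x == c :> nat).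
    by move=> x; rewrite ltnS leq_eqVlt; case: ltngtP.
  rewrite !e1.
  case: (ltnP c n) => cn.
    rewrite (psS w' (Ordinal cn)) (psS w (Ordinal cn)).
    have := hw'i (Ordinal cn); rewrite -!val_eqE /= ![c == _]eq_sym.
    move: IHc; move: (ps w' c) (ps w c) (w' (Ordinal cn)) (w (Ordinal cn)) => x y z t.
    move: (b < c) (a < c) (val b == c) (val a == c) => p q r s.
    case: p; case: q; case: r; case: s => /=; lia.
  have -> : (val b == c) = false by apply/negbTE; rewrite neq_ltn (leq_trans (ltn_ord b) cn).
  have -> : (val a == c) = false by apply/negbTE; rewrite neq_ltn (leq_trans (ltn_ord a) cn).
  by rewrite !addn0 !ps_ge ?(leq_trans cn) // -(@ps_ge _ w' c) // -(@ps_ge _ w c).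
apply: (IH w') => //.
- apply/eqP; rewrite -(eqn_add2r 1) !addn1 -ex -addn1; apply/eqP; symmetry; rewrite /excess.
  have -> : \sum_(i < n) (w i - u i) = \sum_(i < n) ((w' i - u i) + (i == b)).
    apply: eq_bigr => i _; rewrite /w' ffunE.
    case: (i =P a) => [->|ia]; first by rewrite (negbTE anb) addn0; move: wau; 
      move: (w a) (u a) => x y; lia.
    case: (i =P b) => [->|ib]; last by rewrite addn0.
    by move: Pb; move: (w b) (u b) => x y; lia.
  rewrite big_split /=; congr (_ + _).
  by rewrite (bigD1 b) //= eqxx big1 // => i /negbTE ->.
- move=> c; have := pseq c; have := hw c.
  case: (ltnP a c) => ac; case: (ltnP b c) => bc; try lia.
  have psc : ps w c < ps u c.
    rewrite (ps_split w bc) (ps_split u bc) in psb.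
    have e : \sum_(i < n | c <= i < b) w i = \sum_(i < n | c <= i < b) u i.
      apply: eq_bigr => i /andP[ci ib]; apply: mid => //; exact: leq_trans ac ci.
    by rewrite e ltn_add2r in psb.
  lia.
Qed.

Lemma Borel_iff u : Borel m u <-> Db (mdeg m) u.
Proof.
split; first exact: Borel_Db.
move=> /DbsP h I HI Im HB.
by apply: (Db_Borel_aux HI HB (erefl (excess m u)) Im).
Qed.

End BorelChar.
Section Gens.
Variable n : nat.
Variable m : mono n.
Implicit Types u v w p q : mono n.

Lemma dvd_eq w v : mdvd w v -> mdeg v <= mdeg w -> w = v.
Proof.
move=> /forallP h hd; apply/ffunP => i.
have e : \sum_(i < n) (v i - w i) = 0.
  rewrite sumnB => [|j _]; last exact: h.
  by apply/eqP; rewrite subn_eq0.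
move/eqP: e; rewrite sum_nat_eq0 => /forallP /(_ i) /=; rewrite subn_eq0 => hi.
by apply/eqP; rewrite eqn_leq hi h.
Qed.

Lemma mdvd_refl u : mdvd u u.
Proof. by apply/forallP. Qed.

Lemma Borel_deg u : Borel m u -> mdeg m <= mdeg u.
Proof. by move/Borel_iff/DbsP/(_ n); rewrite !psn. Qed.

Lemma mingen_iff d v : d < mdeg m -> mdeg v = d ->
  (min_gen (trunc_ideal d (Borel m)) v <-> Db m d v).
Proof.
move=> ds dv; split.
  move=> [[u [/Borel_iff/DbsP Bu tdv]] _]; apply/DbP => a.
  have := ps_dvd a tdv; rewrite ps_trunc; have := Bu a.
  move: (ps m a) (ps u a) (ps v a) => x y z; lia.
move/DbP => h.
set u := madd v (msub m (trunc d m)).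
have psu : forall a, ps u a = ps v a + (ps m a - minn d (ps m a)).
  by move=> a; rewrite ps_add ps_sub ?trunc_dvd // ps_trunc.
have pvd : forall a, ps v a <= d by move=> a; rewrite -dv; apply: ps_le_deg.
have Bu : Borel m u.
  apply/Borel_iff/DbsP => a; rewrite psu; have := h a.
  move: (ps m a) (ps v a) => x y; lia.
have tu : trunc d u = v.
  apply: ps_inj => a _; rewrite ps_trunc psu; have := h a; have := pvd a.
  move: (ps m a) (ps v a) => x y; lia.
split; first by exists u; split => //; rewrite tu mdvd_refl.
move=> w [u' [Bu' tw]] wv; apply: dvd_eq => //.
have := ps_dvd n tw; rewrite ps_trunc !psn dv; have := Borel_deg Bu'.
move: (mdeg m) (mdeg u') (mdeg w) ds => x y z; lia.
Qed.

Definition supp (c : nat) q := [forall i : 'I_n, (i < c) ==> (q i == 0)].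

Lemma supp_ps c q : (supp c q) = (ps q c == 0).
Proof.
rewrite /ps sum_nat_eq0; apply/forallP/forallP => h i; have := h i.
- by case: (i < c).
- by case: (i < c).
Qed.

Section D.
Variable d : nat.
Hypothesis ds : d < mdeg m.
Let c := var_idx m d.

Lemma decomp_fwd p q : mdeg p = d -> Db m d p -> supp c q ->
  [/\ Db m d (madd p q), ~~ Db m d.+1 (madd p q) & trunc d (madd p q) = p].
Proof.
move=> dp /DbP hp; rewrite supp_ps => /eqP hq.
have pvd : forall a, ps p a <= d by move=> a; rewrite -dp; apply: ps_le_deg.
have key : forall a, (d < ps m a) = (c <= a) by move=> a; apply: var_idx_ps.
split.
- apply/DbP => a; rewrite ps_add; apply: leq_trans (hp a) _; exact: leq_addr.
- apply/negP => /DbP /(_ c); rewrite ps_add hq addn0.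
  have := key c; rewrite leqnn => hc; have := pvd c.
  move: (ps m c) (ps p c) hc => x y; lia.
- apply: ps_inj => a _; rewrite ps_trunc ps_add.
  have := hp a; have := pvd a; have := key a.
  case: (leqP a c) => ac.
    have : ps q a <= ps q c by apply: ps_mono.
    rewrite hq; move: (ps m a) (ps p a) (ps q a) => x y z; lia.
  move: (ps m a) (ps p a) (ps q a) (ltnW ac) => x y z; lia.
Qed.

Lemma decomp_bwd u : Db m d u -> ~~ Db m d.+1 u ->
  [/\ supp c (msub u (trunc d u)), Db m d (trunc d u) & mdeg (trunc d u) = d].
Proof.
move=> hu /forallPn [a' ha']; move/DbP: hu => hu.
have key : forall a, (d < ps m a) = (c <= a) by move=> a; apply: var_idx_ps.
split.
- rewrite supp_ps ps_sub ?trunc_dvd // ps_trunc.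
  have h1 := hu a'; have := key a'.
  have hca : c <= a'.
    rewrite -key; move: ha' h1; move: (ps m a') (ps u a') => x y; lia.
  move=> _; have : ps u c <= ps u a' by apply: ps_mono.
  move: ha' h1; move: (ps m a') (ps u a') (ps u c) => x y z; lia.
- apply/DbP => a; rewrite ps_trunc; have := hu a.
  move: (ps m a) (ps u a) => x y; lia.
- rewrite mdeg_trunc; have := hu n; rewrite !psn.
  move: (mdeg m) (mdeg u) ds => x y; lia.
Qed.

End D.
End Gens.
Definition mons n j : seq (mono n) :=
  [seq u <- map (fun f : {ffun 'I_n -> 'I_j.+1} => ([ffun i => val (f i)] : mono n))
                (enum {ffun 'I_n -> 'I_j.+1}) | mdeg u == j].

Lemma mons_uniq n j : uniq (mons n j).
Proof.
apply: filter_uniq; rewrite map_inj_uniq ?enum_uniq // => f g /ffunP h.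
apply/ffunP => i; apply: val_inj; have := h i; by rewrite !ffunE.
Qed.

Lemma mono_le_deg n (u : mono n) i : u i <= mdeg u.
Proof. by rewrite /mdeg (bigD1 i) //= leq_addr. Qed.

Lemma mem_mons n j (u : mono n) : (u \in mons n j) = (mdeg u == j).
Proof.
rewrite mem_filter; case: eqP => //= hj; apply/mapP.
exists [ffun i => inord (u i) : 'I_j.+1]; first by rewrite mem_enum.
apply/ffunP => i; rewrite !ffunE inordK // ltnS -hj; exact: mono_le_deg.
Qed.

Lemma is_card_count n (P : mono n -> Prop) k (l : seq (mono n)) (b : pred (mono n)) :
  is_card P k -> uniq l -> (forall u, P u <-> (u \in l) && b u) -> k = count b l.
Proof.
move=> [l' [ul' [hP <-]]] ul hb; rewrite -size_filter; apply: perm_size.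
apply: uniq_perm => //; first exact: filter_uniq.
move=> u; rewrite mem_filter andbC; apply/idP/idP => h.
- by apply/hb; apply/hP.
- by apply/hP; apply/hb.
Qed.

Lemma count_bij (T1 T2 : eqType) (l1 : seq T1) (l2 : seq T2) (P : pred T1) (Q : pred T2)
  (f : T1 -> T2) :
  uniq l1 -> uniq l2 -> {in [seq x <- l1 | P x] &, injective f} ->
  (forall x, x \in l1 -> P x -> (f x \in l2) && Q (f x)) ->
  (forall y, y \in l2 -> Q y -> exists2 x, (x \in l1) && P x & f x = y) ->
  count P l1 = count Q l2.
Proof.
move=> u1 u2 inj fw bw; rewrite -!size_filter -(size_map f).
apply: perm_size; apply: uniq_perm.
- by rewrite map_inj_in_uniq // filter_uniq.
- exact: filter_uniq.
move=> y; rewrite mem_filter; apply/mapP/idP.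
- move=> [x]; rewrite mem_filter => /andP[px xl] ->; rewrite andbC; exact: fw.
- move=> /andP[qy yl]; have [x /andP[xl px] <-] := bw y yl qy.
  by exists x => //; rewrite mem_filter px.
Qed.

Lemma count_pairs (T1 T2 : Type) (l1 : seq T1) (l2 : seq T2) (P : pred T1) (Q : pred T2) :
  count (fun x => P x.1 && Q x.2) [seq (x, y) | x <- l1, y <- l2] = count P l1 * count Q l2.
Proof.
elim: l1 => //= x l1 IH; rewrite count_cat IH count_map mulnDl; congr (_ + _).
case Px: (P x); rewrite ?mul1n ?mul0n; first by apply: eq_count => y /=; rewrite Px.
by rewrite -(count_pred0 l2); apply: eq_count => y /=; rewrite Px.
Qed.

Lemma count_split_mono (T : Type) (l : seq T) (R : nat -> pred T) N :
  (forall x, R 0 x) -> (forall d x, R d.+1 x -> R d x) ->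
  count (fun x => ~~ R N x) l = \sum_(d < N) count (fun x => R d x && ~~ R d.+1 x) l.
Proof.
move=> R0 Rm.
have pw : forall x, (~~ R N x : nat) = \sum_(d < N) (R d x && ~~ R d.+1 x : nat).
  move=> x; elim: N => [|N IH]; first by rewrite big_ord0 R0.
  rewrite big_ord_recr /= -IH.
  have := Rm N x; case: (R N x); case: (R N.+1 x) => //= /(_ isT) //.
elim: l => [|x l IH] /=; first by rewrite big1.
by rewrite big_split /= -IH pw.
Qed.

Lemma count_split_val (T : Type) (l : seq T) (P : pred T) (g : T -> nat) N :
  (forall x, P x -> g x < N) ->
  count P l = \sum_(i < N) count (fun x => P x && (g x == i)) l.
Proof.
move=> h; elim: l => [|x l IH] /=; first by rewrite big1.
rewrite big_split /= -IH; congr (_ + _).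
case Px: (P x) => /=; last by rewrite big1.
have gN := h x Px.
by rewrite (bigD1 (Ordinal gN)) //= eqxx big1 // => i /negbTE; rewrite eq_sym -val_eqE /= => ->.
Qed.
Lemma mdeg_bigD1 n (u : mono n) (c0 : 'I_n) : mdeg u = u c0 + \sum_(x < n | x != c0) u x.
Proof. by rewrite /mdeg (bigD1 c0). Qed.

Lemma count_supp n r : forall c k, c + r = n ->
  count (supp c) (mons n k) = inv1mt r k.
Proof.
elim: r => [|r IH] c k hc.
  rewrite addn0 in hc; subst c.
  have -> : count (supp n) (mons n k) = count (pred1 ([ffun=> 0] : mono n)) (mons n k).
    apply: eq_count => u /=; apply/forallP/eqP => [h|->].
      by apply/ffunP => i; rewrite ffunE; have := h i; rewrite ltn_ord => /eqP.
    by move=> i; rewrite ffunE eqxx implybT.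
  rewrite count_uniq_mem ?mons_uniq // mem_mons /mdeg big1 ?ffunE //=; first by rewrite eq_sym.
  by move=> i _; rewrite ffunE.
have cn : c < n by rewrite -hc addnS ltnS leq_addr.
set c0 := Ordinal cn.
rewrite /= (@count_split_val _ _ _ (fun u : mono n => k - u c0) k.+1); last by move=> u _; rewrite ltnS leq_subr.
apply: eq_bigr => i _; rewrite -(IH c.+1 i); last by rewrite addSnnS.
symmetry.
have ik : i <= k by rewrite -ltnS.
set f := fun q : mono n => ([ffun x => if x == c0 then k - i else q x] : mono n).
apply: (@count_bij _ _ _ _ _ _ f).
- exact: mons_uniq.
- exact: mons_uniq.
- move=> q q'; rewrite !mem_filter => /andP[sq _] /andP[sq' _] /ffunP h.
  apply/ffunP => x; have := h x; rewrite !ffunE.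
  case: eqP => // -> _.
  move/forallP: sq => /(_ c0) /implyP /(_ (ltnSn _)) /eqP ->.
  by move/forallP: sq' => /(_ c0) /implyP /(_ (ltnSn _)) /eqP ->.
- move=> q; rewrite mem_mons => /eqP dq sq; apply/andP; split.
    rewrite mem_mons (mdeg_bigD1 _ c0) ffunE eqxx.
    rewrite (eq_bigr (fun x => q x)); last by move=> x /negbTE xc; rewrite ffunE xc.
    move: dq; rewrite (mdeg_bigD1 _ c0).
    move/forallP: sq => /(_ c0) /implyP /(_ (ltnSn _)) /eqP ->.
    by rewrite add0n => ->; rewrite subnK.
  apply/andP; split.
    apply/forallP => x; apply/implyP => xc; rewrite ffunE.
    have -> : (x == c0) = false by apply/negbTE; rewrite -val_eqE /= neq_ltn xc.
    by move/forallP: sq => /(_ x) /implyP; apply; rewrite ltnW.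
  by rewrite ffunE eqxx subKn.
- move=> u; rewrite mem_mons => /eqP du /andP[su /eqP ui].
  have uc : u c0 <= k by rewrite -du mono_le_deg.
  exists ([ffun x => if x == c0 then 0 else u x] : mono n).
    apply/andP; split.
      rewrite mem_mons (mdeg_bigD1 _ c0) ffunE eqxx add0n.
      rewrite (eq_bigr (fun x => u x)); last by move=> x /negbTE xc; rewrite ffunE xc.
      move: du; rewrite (mdeg_bigD1 _ c0) => du; apply/eqP.
      by rewrite -ui -du addKn.
    apply/forallP => x; apply/implyP => xc; rewrite ffunE.
    case: (x =P c0) => // xc0; move/forallP: su => /(_ x) /implyP; apply.
    rewrite ltn_neqAle -ltnS xc andbT; apply/negP => /eqP h; apply: xc0; exact: val_inj.
  apply/ffunP => x; rewrite !ffunE; case: eqP => [->|] //.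
  by rewrite -ui subKn.
Qed.
Section Count.
Variable n : nat.
Variable m : mono n.
Implicit Types u v w p q : mono n.

Lemma count_layer d j : d < mdeg m -> d <= j ->
  count (fun u => Db m d u && ~~ Db m d.+1 u) (mons n j) =
  count (Db m d) (mons n d) * inv1mt (n - var_idx m d) (j - d).
Proof.
move=> ds dj.
rewrite -(@count_supp n (n - var_idx m d) (var_idx m d)); last by rewrite subnKC // var_idx_le.
rewrite -count_pairs; symmetry.
apply: (@count_bij _ _ _ _ _ _ (fun x : mono n * mono n => madd x.1 x.2)).
- by apply: allpairs_uniq; rewrite ?mons_uniq // => -[a b] [c e] _ _ /= ->.
- exact: mons_uniq.
- move=> [p q] [p' q']; rewrite !mem_filter /=.
  move=> /andP[/andP[hp sq] /allpairsP [[x y] [/= xd yd [ex ey]]]].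
  move=> /andP[/andP[hp' sq'] /allpairsP [[x' y'] [/= xd' yd' [ex' ey']]]].
  subst x y x' y'.
  rewrite mem_mons in xd; rewrite mem_mons in xd'.
  have [_ _ t1] := decomp_fwd ds (eqP xd) hp sq.
  have [_ _ t2] := decomp_fwd ds (eqP xd') hp' sq'.
  move=> e; have pp : p = p' by rewrite -t1 -t2 e.
  subst p'; congr (_, _); apply/ffunP => i.
  move/ffunP: e => /(_ i); rewrite !ffunE; exact: addnI.
- move=> [p q] /allpairsP [[x y] [/= xd yd [ex ey]]]; subst x y.
  move=> /andP[hp sq]; rewrite mem_mons in xd; rewrite mem_mons in yd.
  have [h1 h2 _] := decomp_fwd ds (eqP xd) hp sq.
  rewrite mem_mons mdeg_add (eqP xd) (eqP yd) subnKC // eqxx /=.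
  by rewrite h1 h2.
- move=> u; rewrite mem_mons => /eqP du /andP[h1 h2].
  have [sq hp dp] := decomp_bwd ds h1 h2.
  exists (trunc d u, msub u (trunc d u)); last by rewrite /= add_sub // trunc_dvd.
  rewrite /= hp sq !andbT; apply/allpairsP; exists (trunc d u, msub u (trunc d u)).
  rewrite /= !mem_mons dp eqxx; split => //.
  by rewrite -psn ps_sub ?trunc_dvd // !psn dp du.
Qed.

Lemma count_layer0 d j : d < mdeg m -> j < d ->
  count (fun u => Db m d u && ~~ Db m d.+1 u) (mons n j) = 0.
Proof.
move=> ds jd; rewrite -(count_pred0 (mons n j)); apply: eq_in_count => u.
rewrite mem_mons => /eqP du /=; apply/negP => /andP[/DbP /(_ n) h _].
move: h; rewrite !psn du; move: (mdeg m) ds jd => x; lia.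
Qed.

Lemma hf_formula j :
  count (fun u => ~~ Db m (mdeg m) u) (mons n j) =
  \sum_(d < mdeg m | d <= j) count (Db m d) (mons n d) * inv1mt (n - var_idx m d) (j - d).
Proof.
rewrite (@count_split_mono _ _ (fun d u => Db m d u)); last first.
- by move=> d x; apply: Db_mono.
- by move=> x; apply: Db0.
rewrite [RHS]big_mkcond; apply: eq_bigr => d _ /=.
case: leqP => dj; first exact: count_layer.
exact: count_layer0.
Qed.

End Count.

Section Delta.

Definition Dl (a : nat -> int) : nat -> int :=
  fun j => (a j - (if j is j'.+1 then a j' else 0))%R.
Definition Dk k (a : nat -> int) := iter k Dl a.
Definition cv D (h : nat -> int) (j : nat) : int :=
  (\sum_(i < j.+1) h i * (Posz (inv1mt D (j - i))))%R.
Definition delta : nat -> int := fun k => Posz (k == 0).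
Definition invZ r : nat -> int := fun k => Posz (inv1mt r k).

Lemma inv1mt_S r k : inv1mt r.+1 k.+1 = inv1mt r.+1 k + inv1mt r k.+1.
Proof. by rewrite /= big_ord_recr. Qed.

Lemma inv1mt_S0 r : inv1mt r.+1 0 = inv1mt r 0.
Proof. by rewrite /= big_ord1. Qed.

Lemma inv1mt_0 k : inv1mt 0 k = (k == 0).
Proof. by []. Qed.

Arguments inv1mt : simpl never.

Lemma Dl_cv D h : Dl (cv D.+1 h) = cv D h.
Proof.
apply: functional_extensionality => j; rewrite /Dl /cv.
case: j => [|j]; first by rewrite subr0 !big_ord1 inv1mt_S0.
rewrite big_ord_recr /= subnn inv1mt_S0.
rewrite [in RHS]big_ord_recr /= subnn.
rewrite (eq_bigr (fun i : 'I_j.+1 => h i * Posz (inv1mt D.+1 (j - i)) + h i * Posz (inv1mt D (j.+1 - i))))%R; last first.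
  move=> i _; rewrite subSn; last by rewrite -ltnS.
  by rewrite inv1mt_S PoszD mulrDr.
rewrite big_split /=.
ring.
Qed.

Lemma cv0 h : cv 0 h = h.
Proof.
apply: functional_extensionality => j; rewrite /cv big_ord_recr /= subnn inv1mt_0 /= mulr1.
rewrite big1 ?add0r // => i _.
by rewrite inv1mt_0 (_ : (j - i == 0) = false) ?mulr0 //; apply/negbTE; rewrite subn_eq0 -ltnNge.
Qed.

Lemma Dk_cv D h : Dk D (cv D h) = h.
Proof.
elim: D h => [|D IH] h; first exact: cv0.
by rewrite /Dk iterSr -/(Dk D _) Dl_cv IH.
Qed.

Lemma DkS k a : Dk k.+1 a = Dl (Dk k a).
Proof. by rewrite /Dk iterS. Qed.

Lemma DkD k1 k2 a : Dk (k1 + k2) a = Dk k1 (Dk k2 a).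
Proof. by rewrite /Dk iterD. Qed.

Lemma Dl_inj a b : Dl a = Dl b -> a = b.
Proof.
move=> e; apply: functional_extensionality => j; elim/ltn_ind: j => j IH.
have := congr1 (fun f => f j) e; rewrite /Dl.
case: j IH => [|j] IH; first by rewrite !subr0.
by rewrite (IH j) // => /addIr.
Qed.

Lemma Dk_inj k a b : Dk k a = Dk k b -> a = b.
Proof.
elim: k => [|k IH] //; rewrite !DkS => /Dl_inj; exact: IH.
Qed.

Lemma sum_Dl a N : (\sum_(i < N.+1) Dl a i)%R = a N.
Proof.
elim: N => [|N IH]; first by rewrite big_ord1 /Dl subr0.
by rewrite big_ord_recr /= IH /Dl addrC subrK.
Qed.

Definition fsupp (a : nat -> int) N := forall i, N <= i -> a i = 0%R.

Lemma fsupp_Dl a N : fsupp a N -> fsupp (Dl a) N.+1.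
Proof.
move=> h i Ni; rewrite /Dl; case: i Ni => [|i] // Ni.
by rewrite !h ?subr0 // ltnW.
Qed.

Lemma fsupp_Dk k a N : fsupp a N -> fsupp (Dk k a) (N + k).
Proof.
elim: k => [|k IH] h; first by rewrite addn0.
by rewrite DkS addnS; apply: fsupp_Dl; apply: IH.
Qed.

Lemma fsupp_mono a N M : N <= M -> fsupp a N -> fsupp a M.
Proof. by move=> NM h i Mi; apply: h; apply: leq_trans Mi. Qed.

Lemma sum_fsupp a N M : N <= M -> fsupp a N ->
  (\sum_(i < M) a i = \sum_(i < N) a i)%R.
Proof.
move=> NM h; rewrite (big_ord_widen _ _ NM) [RHS]big_mkcond /=.
by apply: eq_bigr => i _; case: ltnP => // Ni; rewrite h.
Qed.

Lemma sum_Dl_fsupp a N M : fsupp a N -> N < M -> (\sum_(i < M) Dl a i = 0)%R.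
Proof.
move=> h NM; case: M NM => [|M] // NM; rewrite sum_Dl h //.
Qed.

Lemma seq_fsupp (h : seq int) : fsupp (fun i => (h`_i)%R) (size h).
Proof. by move=> i hi; rewrite nth_default. Qed.

Lemma conv_seq D (h : seq int) j :
  (\sum_(i < size h | (i <= j)%N) h`_i * Posz (inv1mt D (j - i)))%R = cv D (fun i => (h`_i)%R) j.
Proof.
rewrite /cv (@big_ord_widen_cond _ _ _ (size h) (size h + j.+1) (fun i => i <= j)
   (fun i => h`_i * Posz (inv1mt D (j - i)))%R) ?leq_addr //.
rewrite (@big_ord_widen _ _ _ j.+1 (size h + j.+1) (fun i => h`_i * Posz (inv1mt D (j - i)))%R) ?leq_addl // [LHS]big_mkcond [RHS]big_mkcond /=.
apply: eq_bigr => i _; rewrite ltnS.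
case: (leqP i j) => //= ij; case: ltnP => // hi.
by rewrite nth_default ?mul0r.
Qed.

End Delta.
Section Mult.

Definition hzf (hf : nat -> nat) : nat -> int := fun j => Posz (hf j).

Lemma is_mult_rep hf e : is_multiplicity hf e ->
  exists D (H : nat -> int) N,
    [/\ fsupp H N, Dk D (hzf hf) = H, (\sum_(i < N) H i)%R = e & e != 0%R].
Proof.
move=> [D [h [hfj [se ne]]]].
exists D, (fun i => (h`_i)%R), (size h); split => //; first exact: seq_fsupp.
have -> : hzf hf = cv D (fun i => (h`_i)%R).
  by apply: functional_extensionality => j; rewrite /hzf hfj conv_seq.
exact: Dk_cv.
Qed.

Lemma mult_le hf D1 H1 N1 e1 D2 H2 N2 e2 :
  D1 <= D2 -> fsupp H1 N1 -> Dk D1 (hzf hf) = H1 -> (\sum_(i < N1) H1 i)%R = e1 ->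
  fsupp H2 N2 -> Dk D2 (hzf hf) = H2 -> (\sum_(i < N2) H2 i)%R = e2 -> e2 != 0%R ->
  e1 = e2.
Proof.
move=> D12 f1 h1 s1 f2 h2 s2 ne2.
have e : H2 = Dk (D2 - D1) H1 by rewrite -h2 -h1 -DkD subnK.
case k: (D2 - D1) => [|k'] in e.
  rewrite e /= in f2 s2.
  rewrite -s1 -s2 -(@sum_fsupp H1 N1 (N1 + N2)) ?leq_addr //.
  by rewrite -(@sum_fsupp H1 N2 (N1 + N2)) ?leq_addl.
exfalso; move/eqP: ne2; apply.
rewrite -s2 -(@sum_fsupp H2 N2 (N2 + (N1 + k').+1)) ?leq_addr // e DkS.
apply: (@sum_Dl_fsupp _ (N1 + k')); first exact: fsupp_Dk.
by rewrite addnS ltnS leq_addl.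
Qed.

Lemma mult_unique hf e1 e2 : is_multiplicity hf e1 -> is_multiplicity hf e2 -> e1 = e2.
Proof.
move=> /is_mult_rep [D1 [H1 [N1 [f1 h1 s1 n1]]]] /is_mult_rep [D2 [H2 [N2 [f2 h2 s2 n2]]]].
case: (leqP D1 D2) => D12.
  exact: (mult_le D12 f1 h1 s1 f2 h2 s2 n2).
symmetry; exact: (mult_le (ltnW D12) f2 h2 s2 f1 h1 s1 n1).
Qed.

Definition sh d (F : nat -> int) : nat -> int := fun j => if d <= j then F (j - d) else 0%R.

Lemma Dl_sum (s : nat) (c : nat -> int) (F : nat -> nat -> int) :
  Dl (fun j => \sum_(d < s) c d * F d j)%R = (fun j => \sum_(d < s) c d * Dl (F d) j)%R.
Proof.
apply: functional_extensionality => j; rewrite /Dl.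
case: j => [|j]; first by rewrite subr0; apply: eq_bigr => d _; rewrite subr0.
by rewrite -sumrB; apply: eq_bigr => d _; rewrite mulrBr.
Qed.

Lemma Dk_sum k (s : nat) (c : nat -> int) (F : nat -> nat -> int) :
  Dk k (fun j => \sum_(d < s) c d * F d j)%R = (fun j => \sum_(d < s) c d * Dk k (F d) j)%R.
Proof.
elim: k => [|k IH] //; rewrite DkS IH (Dl_sum s c (fun d => Dk k (F d))).
by apply: functional_extensionality => j; apply: eq_bigr => d _; rewrite DkS.
Qed.

Lemma Dl_sh d F : Dl (sh d F) = sh d (Dl F).
Proof.
apply: functional_extensionality => j; rewrite /Dl /sh.
case: j => [|j].
  by case: d => [|d] //=; rewrite subr0.
case: (ltngtP d j.+1) => dj.
- have dj' : d <= j by rewrite -ltnS.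
  by rewrite dj' subSn.
- by rewrite leqNgt (ltnW dj) subr0.
- by rewrite dj subnn ltnn subr0.
Qed.

Lemma Dk_sh k d F : Dk k (sh d F) = sh d (Dk k F).
Proof. by elim: k => [|k IH] //; rewrite !DkS IH Dl_sh. Qed.

Lemma invZ_cv r : invZ r = cv r delta.
Proof.
apply: functional_extensionality => j; rewrite /cv big_ord_recl /= subn0 mul1r.
by rewrite big1 ?addr0 // => i _; rewrite /delta /= mul0r.
Qed.

Lemma Dk_invZ r : Dk r (invZ r) = delta.
Proof. by rewrite invZ_cv Dk_cv. Qed.

Lemma fsupp_sh d G N : fsupp G N -> fsupp (sh d G) (d + N).
Proof.
move=> h i hi; rewrite /sh; case: ifP => // di; apply: h.
by rewrite leq_subRL // (leq_trans (leq_addr _ _) hi).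
Qed.

Lemma sum_sh d G M : (\sum_(i < d + M) sh d G i = \sum_(i < M) G i)%R.
Proof.
rewrite big_split_ord /= big1 ?add0r.
  apply: eq_bigr => i _; rewrite /sh /= leq_addr; congr G; lia.
by move=> i _; rewrite /sh leqNgt ltn_ord.
Qed.

Lemma fsupp_delta : fsupp delta 1.
Proof. by case. Qed.

Lemma sum_Dk_delta e M : e < M -> (\sum_(i < M) Dk e delta i = Posz (e == 0))%R.
Proof.
case: e => [|k] eM.
  by rewrite /= (@sum_fsupp delta 1 M eM fsupp_delta) big_ord1.
rewrite DkS (@sum_Dl_fsupp _ (1 + k)) //; first by apply: fsupp_Dk; exact: fsupp_delta.
Qed.

Lemma Posz_sum (I : Type) (r : seq I) (P : pred I) (F : I -> nat) :
  Posz (\sum_(i <- r | P i) F i) = (\sum_(i <- r | P i) Posz (F i))%R.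
Proof. exact: (big_morph Posz PoszD (erefl _)). Qed.

Lemma mult_exists (hf c v : nat -> nat) (s n : nat) :
  0 < c 0 -> 0 < s -> (forall d, d < s -> v 0 <= v d /\ v d <= n) ->
  (forall j, hf j = \sum_(d < s | d <= j) c d * inv1mt (n - v d) (j - d)) ->
  is_multiplicity hf (Posz (\sum_(d < s | v d == v 0) c d)).
Proof.
move=> c0 s0 hv hfj.
set D0 := n - v 0.
have ehz : hzf hf = (fun j => \sum_(d < s) Posz (c d) * sh d (invZ (n - v d)) j)%R.
  apply: functional_extensionality => j; rewrite /hzf hfj Posz_sum big_mkcond /=.
  by apply: eq_bigr => d _; rewrite /sh /invZ; case: ifP => _; rewrite ?PoszM ?mulr0.
set H := Dk D0 (hzf hf).
have eH : H = (fun j => \sum_(d < s) Posz (c d) * sh d (Dk (v d - v 0) delta) j)%R.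
  rewrite /H ehz (Dk_sum D0 s (fun d => Posz (c d)) (fun d => sh d (invZ (n - v d)))); apply: functional_extensionality => j.
  apply: eq_bigr => d _; rewrite Dk_sh; congr (_ * sh _ _ _)%R.
  have [h1 h2] := hv d (ltn_ord d).
  rewrite /D0 (_ : n - v 0 = (v d - v 0) + (n - v d)); last by lia.
  by rewrite DkD Dk_invZ.
set N := s + n.
have fH : fsupp H N.
  move=> i Ni; rewrite eH big1 // => d _.
  have [h1 h2] := hv d (ltn_ord d).
  rewrite (@fsupp_sh d _ (1 + (v d - v 0))) ?mulr0 //; first by apply: fsupp_Dk; exact: fsupp_delta.
  apply: leq_trans Ni; have := ltn_ord d; rewrite /N; lia.
have sH : (\sum_(i < N) H i)%R = Posz (\sum_(d < s | v d == v 0) c d).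
  rewrite eH exchange_big /= Posz_sum [RHS]big_mkcond /=; apply: eq_bigr => d _.
  have [h1 h2] := hv d (ltn_ord d).
  rewrite -mulr_sumr -(@subnKC d N) ?sum_sh; last by rewrite /N ltnW // ltn_addr.
  rewrite sum_Dk_delta; last by have := ltn_ord d; rewrite /N; lia.
  rewrite subn_eq0 (_ : (v d <= v 0) = (v d == v 0)); last by apply/idP/eqP; lia.
  by case: (v d == v 0); rewrite ?mulr1 ?mulr0.
set h := [seq H i | i <- iota 0 N].
have hH : (fun i => (h`_i)%R) = H.
  apply: functional_extensionality => i; case: (ltnP i N) => iN.
    by rewrite (nth_map 0) ?size_iota // nth_iota.
  by rewrite nth_default ?size_map ?size_iota // fH.
exists D0, h; split; [|split].
- move=> j; rewrite conv_seq hH.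
  have : hzf hf = cv D0 H by apply: (@Dk_inj D0); rewrite Dk_cv.
  by move=> /(congr1 (fun f => f j)).
- by rewrite size_map size_iota -sH; apply: eq_bigr => i _; rewrite -hH.
- have S0 : 0 < \sum_(d < s | v d == v 0) c d.
    by rewrite (bigD1 (Ordinal s0)) //= ltn_addr.
  by move: S0; case: (\sum_(d < s | v d == v 0) c d).
Qed.

End Mult.
Unset Implicit Arguments.

Theorem proposition4p6 (n : nat) (m : mono n) (c hf : nat -> nat) :
  0 < mdeg m ->
  (forall d, d < mdeg m ->
     is_card (fun u => min_gen (trunc_ideal d (Borel m)) u /\ mdeg u = d) (c d)) ->
  (forall j, is_card (fun u => mdeg u = j /\ ~ Borel m u) (hf j)) ->
  (forall j, hf j = \sum_(d < mdeg m | d <= j) c d * inv1mt (n - var_idx m d) (j - d))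
  /\ (forall e : int, is_multiplicity hf e <->
        e = Posz (\sum_(d < mdeg m | var_idx m d == var_idx m 0) c d)).
Proof.
move=> s0 hc hhf.
have chf : forall j, hf j = count (fun u => ~~ Db m (mdeg m) u) (mons n j).
  move=> j; apply: (is_card_count (hhf j) (mons_uniq n j)) => u; rewrite mem_mons.
  split.
    move=> [du nb]; rewrite du eqxx /=; apply/negP => /Borel_iff; exact: nb.
  by move=> /andP[/eqP du nb]; split => // /Borel_iff; apply/negP.
have cc : forall d, d < mdeg m -> c d = count (Db m d) (mons n d).
  move=> d dm; apply: (is_card_count (hc d dm) (mons_uniq n d)) => u; rewrite mem_mons.
  split.
    move=> [mg du]; rewrite du eqxx /=; exact/(mingen_iff dm du).
  by move=> /andP[/eqP du hu]; split => //; apply/(mingen_iff dm du).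
have form : forall j, hf j = \sum_(d < mdeg m | d <= j) c d * inv1mt (n - var_idx m d) (j - d).
  by move=> j; rewrite chf hf_formula; apply: eq_bigr => d _; rewrite (cc d (ltn_ord d)).
have hex : is_multiplicity hf (Posz (\sum_(d < mdeg m | var_idx m d == var_idx m 0) c d)).
  apply: mult_exists => //.
  - rewrite (cc 0 s0) -has_count; apply/hasP; exists ([ffun=> 0] : mono n).
      by rewrite mem_mons /mdeg big1 // => i _; rewrite ffunE.
    exact: Db0.
  - move=> d dm; split; [exact: var_idx_mono | exact: var_idx_le].
split => // e; split.
  by move=> he; apply: mult_unique he hex.
by move=> ->.
Qed.
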